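(* Let $\delta=\sum_i a_i\delta_{x_i}$ be a purely discontinuous finite measure on $(-\pi,\pi)$, $b\in(-\pi,0)\cup(0,\pi)$, let $\delta_H$ be the polarization of $\delta$ with respect to $b$, and let $I=[b,\pi]$ if $b>0$ and $I=[-\pi,b]$ if $b<0$. Then: (a) for $x\in I$ and $x'=2b-x$: $u_\delta(x)+u_\delta(x')\le u_{\delta_H}(x)+u_{\delta_H}(x')$; (b) for $x\in I$ and $x'=2b-x$: $u_\delta(x)\le u_{\delta_H}(x')$; (c) if $b>0$ and $x\in[-\pi,b]$ (respectively $b<0$ and $x\in[b,\pi]$), then $u_\delta(x)\le u_{\delta_H}(x)$. Moreover, for $b>0$ (resp. $b<0$) the following are equivalent: (i) $u_\delta(x)=u_{\delta_H}(x)$ for some $x\in(-\pi,b]$ (resp. $x\in[b,\pi)$); (ii) this equality holds for all $x\in(-\pi,b]$ (resp. $x\in[b,\pi)$); (iii) $u_\delta\equiv u_{\delta_H}$ on $[-\pi,\pi]$; (iv) $\delta=\delta_H$.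
   Context: A purely discontinuous measure is $\delta=\sum_i a_i\delta_{x_i}$ with distinct points $x_i\in(-\pi,\pi)$, $a_i\ge0$, $\sum_i a_i<\infty$, not the zero measure. $G(x,y)=-\frac{xy}{2\pi}-\frac12|x-y|+\frac{\pi}{2}$ on $[-\pi,\pi]^2$ and $u_\delta(x)=\int G(x,y)\,d\delta(y)=\sum_i a_iG(x,x_i)$. Polarization of $\delta$ with respect to $b$ is the purely discontinuous measure $\delta_H$ defined by: for $b\in(0,\pi)$, $\delta_H(\{x\})=\delta(\{x\})$ for $x\in(-\pi,2b-\pi)$, $\delta_H(\{x\})=\max\{\delta(\{x\}),\delta(\{2b-x\})\}$ for $x\in[2b-\pi,b]$, $\delta_H(\{x\})=\min\{\delta(\{x\}),\delta(\{2b-x\})\}$ for $x\in[b,\pi)$; for $b\in(-\pi,0)$, $\delta_H(\{x\})=\min\{\delta(\{x\}),\delta(\{2b-x\})\}$ for $x\in(-\pi,b]$, $\delta_H(\{x\})=\max\{\delta(\{x\}),\delta(\{2b-x\})\}$ for $x\in[b,2b+\pi]$, $\delta_H(\{x\})=\delta(\{x\})$ for $x\in(2b+\pi,\pi)$. *)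

(* Defs.v *)
From HB Require Import structures.
From mathcomp Require Import all_boot all_order all_algebra.
From mathcomp Require Import all_classical all_reals all_analysis.
Set Implicit Arguments. Unset Strict Implicit. Unset Printing Implicit Defensive.
Import Order.TTheory GRing.Theory Num.Theory.
Local Open Scope classical_set_scope.
Local Open Scope ring_scope.

Section Defs.
Variable R : realType.

(* A purely discontinuous measure is represented by its mass function
   m : R -> R, m x = delta({x}).  Its support is [set x | m x != 0]. *)
Definition supp (m : R -> R) : set R := [set x | m x != 0].

Definition pd_measure (m : R -> R) : Prop :=
  [/\ (forall x, 0 <= m x),
      (forall x, m x != 0 -> - pi < x < pi),
      countable (supp m),
      (\esum_(x in supp m) (m x)%:E < +oo)%E &
      (exists x, m x != 0)].

Definition G (x y : R) : R := - (x * y) / (2 * pi) - `|x - y| / 2 + pi / 2.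

Definition u (m : R -> R) (x : R) : R :=
  fine (\esum_(y in supp m) (m y * G x y)%:E).

Definition polar (b : R) (m : R -> R) (x : R) : R :=
  if ~~ ((- pi < x) && (x < pi)) then 0 else
  if 0 < b then
    (if x < 2 * b - pi then m x
     else if x <= b then Num.max (m x) (m (2 * b - x))
     else Num.min (m x) (m (2 * b - x)))
  else
    (if x <= b then Num.min (m x) (m (2 * b - x))
     else if x <= 2 * b + pi then Num.max (m x) (m (2 * b - x))
     else m x).

Definition Iset (b : R) : set R := if 0 < b then [set` `[b, pi]] else [set` `[- pi, b]].
Definition Jset (b : R) : set R := if 0 < b then [set` `[- pi, b]] else [set` `[b, pi]].
Definition Joset (b : R) : set R := if 0 < b then [set` `]- pi, b]] else [set` `[b, pi[].

End Defs.

(* Main.v *)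
Require Import Defs.
From HB Require Import structures.
From mathcomp Require Import all_boot all_order all_algebra.
From mathcomp Require Import all_classical all_reals all_analysis.
From mathcomp Require Import ring lra.
Import Order.TTheory GRing.Theory Num.Theory.
Local Open Scope classical_set_scope.
Local Open Scope ring_scope.
Section Pair.
Variable R : realType.
Local Open Scope ereal_scope.

Lemma esum_pair (A : set R) (s : R -> R) (f : R -> \bar R) :
  involutive s -> (forall y, A y -> ~ A (s y)) -> (forall y, 0 <= f y) ->
  \esum_(y in [set: R]) f y =
  \esum_(y in A) (f y + f (s y)) + \esum_(y in [set y | ~ A y /\ ~ A (s y)]) f y.
Proof.
move=> sK sA f0.
rewrite (esumID A) // !setTI [X in _ + X](esumID [set y | A (s y)]) //.
have -> : ~` A `&` [set y | A (s y)] = s @` A.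
  apply/seteqP; split => y /=.
    by move=> [nA Asy]; exists (s y) => //; rewrite sK.
  by move=> [z Az <-]; rewrite sK; split => //; apply: sA.
have -> : ~` A `&` ~` [set y | A (s y)] = [set y | ~ A y /\ ~ A (s y)].
  by apply/seteqP; split => y /=; [move=> [? ?] | move=> [? ?]].
rewrite esum_image; last by move=> x y _ _; apply: (inv_inj sK).
by rewrite esumD ?addeA.
Qed.

Lemma pair_le (A : set R) (s : R -> R) (f g : R -> \bar R) :
  involutive s -> (forall y, A y -> ~ A (s y)) -> (forall y, 0 <= f y) ->
  (forall y, 0 <= g y) ->
  (forall y, A y -> f y + f (s y) <= g y + g (s y)) ->
  (forall y, ~ A y -> ~ A (s y) -> f y <= g y) ->
  \esum_(y in [set: R]) f y <= \esum_(y in [set: R]) g y.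
Proof.
move=> sK sA f0 g0 hA hR; rewrite (esum_pair _ _ _ sK sA f0) (esum_pair _ _ _ sK sA g0).
apply: leeD; first by apply: le_esum => y /hA.
by apply: le_esum => y [] /hR H /H.
Qed.

Lemma pair_lt (A : set R) (s : R -> R) (f g : R -> \bar R) y0 :
  involutive s -> (forall y, A y -> ~ A (s y)) -> (forall y, 0 <= f y) ->
  (forall y, 0 <= g y) ->
  (forall y, A y -> f y + f (s y) <= g y + g (s y)) ->
  (forall y, ~ A y -> ~ A (s y) -> f y <= g y) ->
  A y0 -> f y0 + f (s y0) < g y0 + g (s y0) ->
  \esum_(y in [set: R]) g y \is a fin_num ->
  \esum_(y in [set: R]) f y < \esum_(y in [set: R]) g y.
Proof.
move=> sK sA f0 g0 hA hR Ay0 hlt gfin; move: gfin.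
rewrite (esum_pair _ _ _ sK sA f0) (esum_pair _ _ _ sK sA g0).
have F0 : forall y, A y -> 0 <= f y + f (s y) by move=> y _; rewrite adde_ge0.
have G0 : forall y, A y -> 0 <= g y + g (s y) by move=> y _; rewrite adde_ge0.
rewrite (esumID [set y0] _ _ F0) (esumID [set y0] _ _ G0).
have -> : A `&` [set y0] = [set y0] by apply/seteqP; split => y /=; [case|move=> ->].
rewrite !esum_set1 ?adde_ge0 //.
set Z1 := esum _ (fun y => f y + f (s y)).
set Z2 := esum _ (fun y => g y + g (s y)).
set Y1 := esum _ f. set Y2 := esum _ g.
have Z12 : Z1 <= Z2 by apply: le_esum => y [] /hA.
have Y12 : Y1 <= Y2 by apply: le_esum => y [] /hR.
have Z10 : 0 <= Z1 by apply: esum_ge0 => y [] /F0.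
have Y10 : 0 <= Y1 by apply: esum_ge0 => y _; exact: f0.
move=> H.
have /andP[H1 Y2f] : (g y0 + g (s y0) + Z2 \is a fin_num) && (Y2 \is a fin_num) by rewrite -fin_numD.
have /andP[_ Z2f] : (g y0 + g (s y0) \is a fin_num) && (Z2 \is a fin_num) by rewrite -fin_numD.
have Z1f : Z1 \is a fin_num.
  by rewrite ge0_fin_numE // (le_lt_trans Z12) // ltey_eq Z2f.
have Y1f : Y1 \is a fin_num.
  by rewrite ge0_fin_numE // (le_lt_trans Y12) // ltey_eq Y2f.
apply: lte_leD => //.
exact: lte_leD.
Qed.
End Pair.
Section Greal.
Variable R : realType.
Implicit Types x y : R.

Definition Gn x y : R := pi ^+ 2 - x * y - pi * `|x - y|.

Lemma pi_neq0' : (pi : R) != 0. Proof. by rewrite gt_eqF // pi_gt0. Qed.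

Lemma GE x y : G x y = Gn x y / (2 * pi).
Proof. rewrite /G /Gn; move: pi_neq0'; set p := pi => hp; clearbody p; by field. Qed.

Lemma Gn_le x y : x <= y -> Gn x y = (pi + x) * (pi - y).
Proof. by move=> h; rewrite /Gn ler0_norm ?subr_le0 //; ring. Qed.

Lemma Gn_ge x y : y <= x -> Gn x y = (pi + y) * (pi - x).
Proof. by move=> h; rewrite /Gn ger0_norm ?subr_ge0 //; ring. Qed.

Lemma c_gt0 : 0 < (2 * pi : R)^-1.
Proof. by rewrite invr_gt0 mulr_gt0 // pi_gt0. Qed.

Lemma G_le_G x y x' y' : Gn x y <= Gn x' y' -> G x y <= G x' y'.
Proof. by move=> h; rewrite !GE ler_pM2r // c_gt0. Qed.

Lemma G_lt_G x y x' y' : Gn x y < Gn x' y' -> G x y < G x' y'.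
Proof. by move=> h; rewrite !GE ltr_pM2r // c_gt0. Qed.

Lemma G_le_G2 x1 y1 x2 y2 x3 y3 x4 y4 :
  Gn x1 y1 + Gn x2 y2 <= Gn x3 y3 + Gn x4 y4 ->
  G x1 y1 + G x2 y2 <= G x3 y3 + G x4 y4.
Proof. by move=> h; rewrite !GE -!mulrDl ler_pM2r // c_gt0. Qed.

Lemma G_ge0 x y : -pi <= x <= pi -> -pi <= y <= pi -> 0 <= G x y.
Proof.
move=> /andP[x1 x2] /andP[y1 y2]; rewrite GE mulr_ge0 ?(ltW c_gt0) //.
have [h|h] := lerP x y; [rewrite Gn_le // | rewrite (Gn_ge _ _ (ltW h))];
  apply: mulr_ge0; lra.
Qed.

Lemma G_le4 x y : -pi <= x <= pi -> -pi <= y <= pi -> G x y <= 4.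
Proof.
move=> /andP[x1 x2] /andP[y1 y2].
have p2 := @pihalf_lt2 R. have p0 := @pi_gt0 R.
suff : G x y <= pi by lra.
rewrite GE ler_pdivrMr ?mulr_gt0 //.
have [h|h] := lerP x y; [rewrite Gn_le // | rewrite (Gn_ge _ _ (ltW h))]; nra.
Qed.

Lemma L1 (p q a c : R) : 0 <= p -> 0 <= q -> a <= c ->
  p * a + q * c <= Num.min p q * a + Num.max p q * c.
Proof. move=> hp hq hac; case: (lerP p q) => h; nra. Qed.

Lemma L1s (p q a c : R) : 0 <= q -> q < p -> a < c ->
  p * a + q * c < Num.min p q * a + Num.max p q * c.
Proof. move=> hq hpq hac; case: (lerP p q) => h; nra. Qed.

Lemma L2 (p q a bb c d : R) : 0 <= p -> 0 <= q ->
  a + bb <= c + d -> bb <= d -> a <= d ->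
  p * a + q * bb <= Num.min p q * c + Num.max p q * d.
Proof. move=> hp hq h1 h2 h3; case: (lerP p q) => h; nra. Qed.
End Greal.
Ltac gsplit x y := let h := fresh in have [h|h] := lerP x y;
  [rewrite (@Gn_le _ x y h) | rewrite (@Gn_ge _ x y (ltW h))].

Section Gineq.
Variable R : realType.
Implicit Types x y b : R.

Lemma Gpos_a b x y : 0 < b < pi -> b <= x <= pi -> b < y < pi ->
  G x y + G (2*b-x) y <= G x (2*b-y) + G (2*b-x) (2*b-y).
Proof.
move=> /andP[b0 b1] /andP[x0 x1] /andP[y0 y1]; apply: G_le_G2.
gsplit x y; gsplit (2*b-x) y; gsplit x (2*b-y); gsplit (2*b-x) (2*b-y); nra.
Qed.

Lemma Gpos_b b x y : 0 < b < pi -> b <= x <= pi -> b < y < pi ->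
  [/\ G x y + G x (2*b-y) <= G (2*b-x) y + G (2*b-x) (2*b-y),
      G x (2*b-y) <= G (2*b-x) (2*b-y) & G x y <= G (2*b-x) (2*b-y)].
Proof.
move=> /andP[b0 b1] /andP[x0 x1] /andP[y0 y1]; split.
- apply: G_le_G2.
  gsplit x y; gsplit (2*b-x) y; gsplit x (2*b-y); gsplit (2*b-x) (2*b-y); nra.
- apply: G_le_G.
  gsplit x (2*b-y); gsplit (2*b-x) (2*b-y); nra.
- apply: G_le_G.
  gsplit x y; gsplit (2*b-x) (2*b-y); nra.
Qed.

Lemma Gpos_r b x y : 0 < b < pi -> b <= x <= pi -> - pi < y < pi ->
  (y = b \/ y <= 2*b - pi) -> G x y <= G (2*b-x) y.
Proof.
move=> /andP[b0 b1] /andP[x0 x1] /andP[y0 y1] hy; apply: G_le_G.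
gsplit x y; gsplit (2*b-x) y; case: hy => hy; nra.
Qed.

Lemma Gpos_c b x y : 0 < b < pi -> - pi <= x <= b -> b < y < pi ->
  G x y <= G x (2*b-y).
Proof.
move=> /andP[b0 b1] /andP[x0 x1] /andP[y0 y1]; apply: G_le_G.
gsplit x y; gsplit x (2*b-y); nra.
Qed.

Lemma Gpos_cs b x y : 0 < b < pi -> - pi < x <= b -> b < y < pi ->
  G x y < G x (2*b-y).
Proof.
move=> /andP[b0 b1] /andP[x0 x1] /andP[y0 y1]; apply: G_lt_G.
gsplit x y; gsplit x (2*b-y); nra.
Qed.

Lemma Gneg_a b x y : - pi < b < 0 -> - pi <= x <= b -> - pi < y < b ->
  G x y + G (2*b-x) y <= G x (2*b-y) + G (2*b-x) (2*b-y).
Proof.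
move=> /andP[b0 b1] /andP[x0 x1] /andP[y0 y1]; apply: G_le_G2.
gsplit x y; gsplit (2*b-x) y; gsplit x (2*b-y); gsplit (2*b-x) (2*b-y); nra.
Qed.

Lemma Gneg_b b x y : - pi < b < 0 -> - pi <= x <= b -> - pi < y < b ->
  [/\ G x y + G x (2*b-y) <= G (2*b-x) y + G (2*b-x) (2*b-y),
      G x (2*b-y) <= G (2*b-x) (2*b-y) & G x y <= G (2*b-x) (2*b-y)].
Proof.
move=> /andP[b0 b1] /andP[x0 x1] /andP[y0 y1]; split.
- apply: G_le_G2.
  gsplit x y; gsplit (2*b-x) y; gsplit x (2*b-y); gsplit (2*b-x) (2*b-y); nra.
- apply: G_le_G.
  gsplit x (2*b-y); gsplit (2*b-x) (2*b-y); nra.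
- apply: G_le_G.
  gsplit x y; gsplit (2*b-x) (2*b-y); nra.
Qed.

Lemma Gneg_r b x y : - pi < b < 0 -> - pi <= x <= b -> - pi < y < pi ->
  (y = b \/ 2*b + pi <= y) -> G x y <= G (2*b-x) y.
Proof.
move=> /andP[b0 b1] /andP[x0 x1] /andP[y0 y1] hy; apply: G_le_G.
gsplit x y; gsplit (2*b-x) y; case: hy => hy; nra.
Qed.

Lemma Gneg_c b x y : - pi < b < 0 -> b <= x <= pi -> - pi < y < b ->
  G x y <= G x (2*b-y).
Proof.
move=> /andP[b0 b1] /andP[x0 x1] /andP[y0 y1]; apply: G_le_G.
gsplit x y; gsplit x (2*b-y); nra.
Qed.

Lemma Gneg_cs b x y : - pi < b < 0 -> b <= x < pi -> - pi < y < b ->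
  G x y < G x (2*b-y).
Proof.
move=> /andP[b0 b1] /andP[x0 x1] /andP[y0 y1]; apply: G_lt_G.
gsplit x y; gsplit x (2*b-y); nra.
Qed.
End Gineq.
Section Main.
Variable R : realType.
Implicit Types m : R -> R.

Definition good m := (forall x, 0 <= m x) /\ (forall x, m x != 0 -> - pi < x < pi).
Definition T m (x : R) : R -> \bar R := fun y => (m y * G x y)%:E.
Definition E m x := \esum_(y in [set: R]) T m x y.
Definition M m := \esum_(y in [set: R]) (m y)%:E.

Lemma supp_esum m (F : R -> R) : (forall y, m y = 0 -> F y = 0) ->
  \esum_(y in supp m) (F y)%:E = \esum_(y in [set: R]) (F y)%:E.
Proof.
move=> hF; rewrite esum_mkcond; apply: eq_esum => y _.
case: ifPn => // yS; rewrite hF //; apply/eqP; apply: contraNT yS => h.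
exact: mem_set.
Qed.

Lemma uE m x : u m x = fine (E m x).
Proof. by rewrite /u (supp_esum m) // => y ->; rewrite mul0r. Qed.

Lemma good_out m : good m -> forall x, ~~ (- pi < x < pi) -> m x = 0.
Proof. by move=> [_ h] x hx; apply/eqP; apply: contraNT hx => /h. Qed.

Lemma T_ge0 m x : good m -> - pi <= x <= pi -> forall y, (0 <= T m x y)%E.
Proof.
move=> [h0 h1] hx y; rewrite /T lee_fin.
have [->|/h1 /andP[y1 y2]] := eqVneq (m y) 0; first by rewrite mul0r.
by rewrite mulr_ge0 // G_ge0 // ltW ?y1 ?ltW.
Qed.

Lemma E_fin m x : good m -> M m \is a fin_num -> - pi <= x <= pi ->
  E m x \is a fin_num.
Proof.
move=> gm Mf hx.
have E0 : (0 <= E m x)%E by apply: esum_ge0 => y _; apply: T_ge0.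
rewrite ge0_fin_numE //.
have S : (M m + M m + (M m + M m)) \is a fin_num by rewrite !fin_numD Mf.
apply: (@le_lt_trans _ _ (M m + M m + (M m + M m))%E); last first.
  by rewrite ltey_eq S.
have m0 : forall y, (0 <= (m y)%:E)%E by move=> y; rewrite lee_fin; apply gm.1.
rewrite /M -!esumD //; last by move=> y _; rewrite adde_ge0.
  apply: le_esum => y _; rewrite /T -!EFinD lee_fin.
  have [->|/gm.2 /andP[y1 y2]] := eqVneq (m y) 0; first by rewrite mul0r; lra.
  have hy : -pi <= y <= pi by rewrite !ltW.
  have := G_le4 _ _ _ hx hy; have := gm.1 y; nra.
by move=> y _; rewrite adde_ge0.
Qed.

Lemma good_polar b m : good m -> good (polar b m).
Proof.
move=> [h0 h1]; split => x; rewrite /polar.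
  by repeat case: ifP => _; rewrite ?le_min ?le_max ?h0.
by case: ifPn => [_|/negPn h _ //]; rewrite eqxx.
Qed.

Lemma core m (b : R) (A I J Jo : set R) :
  good m -> M m \is a fin_num ->
  (forall y, A y -> ~ A (2*b - y)) ->
  (forall y, A y -> polar b m y = Num.min (m y) (m (2*b-y)) /\
                    polar b m (2*b-y) = Num.max (m y) (m (2*b-y))) ->
  (forall y, ~ A y -> ~ A (2*b-y) -> polar b m y = m y) ->
  (forall x, I x -> - pi <= x <= pi /\ - pi <= 2*b-x <= pi) ->
  (forall x, J x -> - pi <= x <= pi) ->
  (forall x, Jo x -> J x) -> Jo b ->
  (forall x y, I x -> A y ->
     G x y + G (2*b-x) y <= G x (2*b-y) + G (2*b-x) (2*b-y)) ->
  (forall x y, I x -> A y ->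
     [/\ G x y + G x (2*b-y) <= G (2*b-x) y + G (2*b-x) (2*b-y),
         G x (2*b-y) <= G (2*b-x) (2*b-y) & G x y <= G (2*b-x) (2*b-y)]) ->
  (forall x y, I x -> ~ A y -> ~ A (2*b-y) -> - pi < y < pi ->
     G x y <= G (2*b-x) y) ->
  (forall x y, J x -> A y -> G x y <= G x (2*b-y)) ->
  (forall x y, Jo x -> A y -> G x y < G x (2*b-y)) ->
  let mH := polar b m in
  (forall x, I x -> u m x + u m (2 * b - x) <= u mH x + u mH (2 * b - x)) /\
  (forall x, I x -> u m x <= u mH (2 * b - x)) /\
  (forall x, J x -> u m x <= u mH x) /\
  (let P1 := exists2 x, Jo x & u m x = u mH x in
   let P2 := forall x, Jo x -> u m x = u mH x in
   let P3 := forall x, - pi <= x <= pi -> u m x = u mH x in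
   let P4 := m = mH in
   (P1 <-> P4) /\ (P2 <-> P4) /\ (P3 <-> P4)).
Proof.
move=> gm Mf sA HA HR HI HJ HJo Jb Ga Gb Gr Gc Gcs mH; rewrite /mH; clear mH.
set s := fun y : R => 2 * b - y.
have sK : involutive s by move=> y; rewrite /s; ring.
have gH : good (polar b m) := good_polar b m gm.
have m0 : forall y, (0 <= (m y)%:E)%E by move=> y; rewrite lee_fin; apply gm.1.
have mH0 : forall y, (0 <= (polar b m y)%:E)%E by move=> y; rewrite lee_fin; apply gH.1.
have MH : M (polar b m) = M m.
  apply/eqP; rewrite eq_le; apply/andP; split;
    apply: (pair_le _ A s) => //.
  - by move=> y Ay; have [h1 h2] := HA y Ay; rewrite /s h1 h2 -!EFinD addr_min_max.
  - by move=> y h1 h2; rewrite HR.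
  - by move=> y Ay; have [h1 h2] := HA y Ay; rewrite /s h1 h2 -!EFinD addr_min_max.
  - by move=> y h1 h2; rewrite HR.
have MHf : M (polar b m) \is a fin_num by rewrite MH.
have hcA : forall x, - pi <= x <= pi -> (forall y, A y -> G x y <= G x (2*b-y)) ->
    forall y, A y -> (T m x y + T m x (s y) <= T (polar b m) x y + T (polar b m) x (s y))%E.
  move=> x hx hG y Ay; have [h1 h2] := HA y Ay.
  by rewrite /T /s h1 h2 -!EFinD lee_fin; apply: L1 => //; [apply gm.1|apply gm.1|apply: hG].
have hcR : forall x y, ~ A y -> ~ A (s y) -> (T m x y <= T (polar b m) x y)%E.
  by move=> x y h1 h2; rewrite /T HR.
split.
  move=> x Ix; have [hx hsx] := HI x Ix.
  have e1 := E_fin _ _ gm Mf hx; have e2 := E_fin _ _ gm Mf hsx.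
  have e3 := E_fin _ _ gH MHf hx; have e4 := E_fin _ _ gH MHf hsx.
  rewrite !uE -(fineD e1 e2) -(fineD e3 e4); apply: fine_le.
  - by rewrite fin_numD e1 e2.
  - by rewrite fin_numD e3 e4.
  rewrite /E -!esumD //; try by move=> y _; apply: T_ge0.
  apply: (pair_le _ A s) => //.
  - by move=> y; rewrite adde_ge0 // T_ge0.
  - by move=> y; rewrite adde_ge0 // T_ge0.
  - move=> y Ay; have [h1 h2] := HA y Ay.
    rewrite /T /s h1 h2 -!EFinD lee_fin -!mulrDr; apply: L1; [apply gm.1|apply gm.1|].
    exact: Ga.
  - by move=> y h1 h2; rewrite /T HR.
split.
  move=> x Ix; have [hx hsx] := HI x Ix.
  rewrite !uE; apply: fine_le; [exact: (E_fin _ _ gm Mf hx)|exact: (E_fin _ _ gH MHf hsx)|].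
  apply: (pair_le _ A s) => //; try by move=> y; apply: T_ge0.
  - move=> y Ay; have [h1 h2] := HA y Ay; have [g1 g2 g3] := Gb x y Ix Ay.
    rewrite /T /s h1 h2 -!EFinD lee_fin; apply: L2 => //; apply gm.1.
  - move=> y h1 h2; rewrite /T HR // lee_fin.
    have [->|/[dup] my /gm.2 hy] := eqVneq (m y) 0; first by rewrite !mul0r.
    by apply: ler_wpM2l; [apply gm.1 | apply: Gr].
split.
  move=> x Jx; have hx := HJ x Jx.
  rewrite !uE; apply: fine_le; [exact: (E_fin _ _ gm Mf hx)|exact: (E_fin _ _ gH MHf hx)|].
  apply: (pair_le _ A s) => //; try by move=> y; apply: T_ge0.
  - by apply: hcA => // y Ay; apply: Gc.
  - exact: hcR.
have key : (exists2 x, Jo x & u m x = u (polar b m) x) -> m = polar b m.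
  move=> [x0 Jx0 heq]; have hx0 := HJ x0 (HJo x0 Jx0).
  apply: funext => y1; apply/eqP/negPn/negP => neq.
  have [y0 [Ay0 lt0]] : exists y0, A y0 /\ m (s y0) < m y0.
    case: (pselect (A y1)) => [Ay1|nA1].
      exists y1; split => //; have [h1 _] := HA y1 Ay1.
      by move: neq; rewrite h1 /s; case: lerP => h; rewrite ?eqxx.
    case: (pselect (A (s y1))) => [As1|nAs1]; last by move: neq; rewrite HR // eqxx.
    exists (s y1); split => //; have [_ h2] := HA _ As1.
    move: h2; rewrite -/(s (s y1)) sK => h2.
    by move: neq; rewrite h2 /s; case: lerP => h; rewrite ?eqxx // maxC; case: lerP.
  have : (E m x0 < E (polar b m) x0)%E.
    apply: (pair_lt _ A s _ _ y0) => //; try by move=> y; apply: T_ge0.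
    - by apply: hcA => // y Ay; apply: Gc => //; apply: HJo.
    - exact: hcR.
    - have [h1 h2] := HA y0 Ay0.
      rewrite /T /s h1 h2 -!EFinD lte_fin; apply: L1s => //; first by apply gm.1.
      exact: Gcs.
    - exact: E_fin.
  move: heq; rewrite !uE => heq.
  by rewrite -(fineK (E_fin _ _ gm Mf hx0)) -(fineK (E_fin _ _ gH MHf hx0)) heq ltxx.
have hb : - pi <= b <= pi := HJ b (HJo b Jb).
split; [split; [exact: key | move=> e; exists b => //; by rewrite -e]|].
split; split.
- by move=> h; apply: key; exists b => //; apply: h.
- by move=> e x _; rewrite -e.
- by move=> h; apply: key; exists b => //; apply: h.
- by move=> e x _; rewrite -e.
Qed.
End Main.

Arguments good {R}. Arguments M {R}. Arguments E {R}. Arguments T {R}.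
Arguments supp_esum {R}. Arguments good_out {R}.

Ltac bF := apply/negbTE; rewrite -?leNgt -?ltNge; lra.

Theorem lemma4p4 (R : realType) (m : R -> R) (b : R) :
  pd_measure m ->
  (- pi < b < 0) \/ (0 < b < pi) ->
  let mH := polar b m in
  (* (a) *)
  (forall x, Iset b x -> u m x + u m (2 * b - x) <= u mH x + u mH (2 * b - x)) /\
  (* (b) *)
  (forall x, Iset b x -> u m x <= u mH (2 * b - x)) /\
  (* (c) *)
  (forall x, Jset b x -> u m x <= u mH x) /\
  (* equivalence of (i)-(iv) *)
  (let P1 := exists2 x, Joset b x & u m x = u mH x in
   let P2 := forall x, Joset b x -> u m x = u mH x in
   let P3 := forall x, - pi <= x <= pi -> u m x = u mH x in
   let P4 := m = mH in
   (P1 <-> P4) /\ (P2 <-> P4) /\ (P3 <-> P4)).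
Proof.
move=> [h0 hh1 _ hsum _] hb.
have gm : good m by split.
clear h0 hh1.
have Mf : M m \is a fin_num.
  move: hsum; rewrite (supp_esum m) // => hsum.
  rewrite ge0_fin_numE; first exact: hsum.
  by apply: esum_ge0 => y _; rewrite lee_fin; apply gm.1.
clear hsum; have p0 : (0 : R) < pi := pi_gt0 R.
case: hb => /andP[b0 b1].
-
  have nb : (0 < b) = false by bF.
  rewrite /Iset /Jset /Joset nb /=.
  apply: (core _ _ _ [set y | - pi < y < b] _ _ _ gm Mf).
  + by move=> y /= /andP[y1 y2] /andP[y3 y4]; lra.
  + move=> y /= /andP[y1 y2]; rewrite /polar.
    have -> : (- pi < y < pi) = true by apply/andP; split; lra.
    have -> : (- pi < 2 * b - y < pi) = true by apply/andP; split; lra.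
    rewrite /= nb (_ : y <= b = true); last by apply/idP; lra.
    rewrite (_ : 2 * b - y <= b = false); last by bF.
    rewrite (_ : 2 * b - y <= 2 * b + pi = true); last by apply/idP; lra.
    by rewrite (_ : 2 * b - (2 * b - y) = y); [rewrite maxC | ring].
  + move=> y /= hA hsA; rewrite /polar.
    case: ifPn => [hout|hin]; first by rewrite (good_out _ gm _ hout).
    move: hin => /negPn/andP[y1 y2]; rewrite /= nb.
    case: ifPn => h1.
      have -> : y = b; last by rewrite (_ : 2 * b - b = b) ?minxx //; ring.
      apply/eqP; rewrite eq_le h1 /=; rewrite leNgt; apply/negP => h.
      by apply: hA; rewrite h andbT.
    rewrite -ltNge in h1; case: ifPn => // h2.
    have e : 2 * b - y = - pi.
      apply/eqP; rewrite eq_le; apply/andP; split; last by lra.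
      rewrite leNgt; apply/negP => h; apply: hsA; apply/andP; split => //; lra.
    rewrite e (good_out _ gm (- pi)); [by apply/max_idPl; apply gm.1 | by rewrite ltxx].
  + move=> x /=; rewrite in_itv /= => /andP[x1 x2]; split; apply/andP; split; lra.
  + move=> x /=; rewrite in_itv /= => /andP[x1 x2]; apply/andP; split; lra.
  + by move=> x /=; rewrite !in_itv /= => /andP[-> /ltW].
  + by rewrite /= in_itv /= lexx /=; lra.
  + move=> x y /=; rewrite in_itv /= => hx hy; by apply: Gneg_a; rewrite ?b0 ?b1.
  + move=> x y /=; rewrite in_itv /= => hx hy; by apply: Gneg_b; rewrite ?b0 ?b1.
  + move=> x y /=; rewrite in_itv /= => hx hA hsA hy; apply: Gneg_r; rewrite ?b0 ?b1 //.
    move: hy => /andP[y1 y2].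
    have yb : b <= y by rewrite leNgt; apply/negP => h; apply: hA; apply/andP.
    have [e|ne] := eqVneq y b; [by left | right].
    have ylt : b < y by rewrite lt_neqAle eq_sym ne yb.
    rewrite leNgt; apply/negP => h; apply: hsA; apply/andP; split; lra.
  + move=> x y /=; rewrite in_itv /= => hx hy; by apply: Gneg_c; rewrite ?b0 ?b1.
  + move=> x y /=; rewrite in_itv /= => hx hy; by apply: Gneg_cs; rewrite ?b0 ?b1.
-
  rewrite /Iset /Jset /Joset b0 /=.
  apply: (core _ _ _ [set y | b < y < pi] _ _ _ gm Mf).
  + by move=> y /= /andP[y1 y2] /andP[y3 y4]; lra.
  + move=> y /= /andP[y1 y2]; rewrite /polar.
    have -> : (- pi < y < pi) = true by apply/andP; split; lra.
    have -> : (- pi < 2 * b - y < pi) = true by apply/andP; split; lra.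
    rewrite /= b0 (_ : y < 2 * b - pi = false); last by bF.
    rewrite (_ : y <= b = false); last by bF.
    rewrite (_ : 2 * b - y < 2 * b - pi = false); last by bF.
    rewrite (_ : 2 * b - y <= b = true); last by apply/idP; lra.
    by rewrite (_ : 2 * b - (2 * b - y) = y); [rewrite maxC | ring].
  + move=> y /= hA hsA; rewrite /polar.
    case: ifPn => [hout|hin]; first by rewrite (good_out _ gm _ hout).
    move: hin => /negPn/andP[y1 y2]; rewrite /= b0.
    case: ifPn => // h1; rewrite -leNgt in h1.
    case: ifPn => h2; last first.
      by exfalso; apply: hA; rewrite -ltNge in h2; rewrite h2 y2.
    have [e|ne] := eqVneq y b; first by rewrite e (_ : 2 * b - b = b) ?maxxx //; ring.
    have ylt : y < b by rewrite lt_neqAle ne h2.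
    have e : 2 * b - y = pi.
      apply/eqP; rewrite eq_le; apply/andP; split; first by lra.
      rewrite leNgt; apply/negP => h; apply: hsA; apply/andP; split => //; lra.
    rewrite e (good_out _ gm pi); [by apply/max_idPl; apply gm.1 | by rewrite ltxx andbF].
  + move=> x /=; rewrite in_itv /= => /andP[x1 x2]; split; apply/andP; split; lra.
  + move=> x /=; rewrite in_itv /= => /andP[x1 x2]; apply/andP; split; lra.
  + by move=> x /=; rewrite !in_itv /= => /andP[/ltW -> ->].
  + by rewrite /= in_itv /= lexx andbT; lra.
  + move=> x y /=; rewrite in_itv /= => hx hy; by apply: Gpos_a; rewrite ?b0 ?b1.
  + move=> x y /=; rewrite in_itv /= => hx hy; by apply: Gpos_b; rewrite ?b0 ?b1.
  + move=> x y /=; rewrite in_itv /= => hx hA hsA hy; apply: Gpos_r; rewrite ?b0 ?b1 //.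
    move: hy => /andP[y1 y2].
    have yb : y <= b by rewrite leNgt; apply/negP => h; apply: hA; apply/andP.
    have [e|ne] := eqVneq y b; [by left | right].
    have ylt : y < b by rewrite lt_neqAle ne yb.
    rewrite leNgt; apply/negP => h; apply: hsA; apply/andP; split; lra.
  + move=> x y /=; rewrite in_itv /= => hx hy; by apply: Gpos_c; rewrite ?b0 ?b1.
  + move=> x y /=; rewrite in_itv /= => hx hy; by apply: Gpos_cs; rewrite ?b0 ?b1.
Qed.
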